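(* Let $p$ be a prime and $N$ an integer with $p^2>N\ge1$. The linear complexity $L_p(N)$ of the sequence $q_p(u)$, $u=0,\ldots,N-1$ (viewed as elements of $\mathbb{F}_p$), satisfies $$L_p(N)\ge\frac12\min\{p-1,\,N-p-1\}.$$
   Context: For a prime $p$ and an integer $u$ with $\gcd(u,p)=1$, the Fermat quotient $q_p(u)$ is the unique integer with $q_p(u)\equiv (u^{p-1}-1)/p \pmod p$ and $0\le q_p(u)\le p-1$; also $q_p(kp)=0$ for all $k\in\mathbb{Z}$. The linear complexity of an $N$-element sequence $s_0,\ldots,s_{N-1}$ in a ring $\mathcal{R}$ is the smallest $L$ such that $s_{u+L}=c_{L-1}s_{u+L-1}+\cdots+c_0s_u$ for all $0\le u\le N-L-1$, for some $c_0,\ldots,c_{L-1}\in\mathcal{R}$. *)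

(* Defs.v *)
From mathcomp Require Import all_boot all_algebra.
From mathcomp Require Import boolp.
Set Implicit Arguments. Unset Strict Implicit. Unset Printing Implicit Defensive.
Import GRing.Theory.
Local Open Scope ring_scope.

(* Fermat quotient q_p(u) for u : nat, as an integer in [0, p-1]:
   0 if p | u, otherwise ((u^(p-1) - 1)/p) mod p (the division is exact
   by Fermat's little theorem when p is prime and p does not divide u). *)
Definition fermat_quotient (p u : nat) : nat :=
  if (p %| u)%N then 0%N else ((((u ^ (p - 1)).-1) %/ p) %% p)%N.

Definition has_lin_rec (R : pzRingType) (s : nat -> R) (N L : nat) : Prop :=
  exists c : 'I_L -> R, forall u : nat, (u + L < N)%N ->
    s (u + L)%N = \sum_(i < L) c i * s (u + i)%N.

Lemma has_lin_rec_N (R : pzRingType) (s : nat -> R) (N : nat) :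
  exists L, `[< has_lin_rec s N L >].
Proof.
exists N; apply/asboolP; exists (fun _ => 0) => u; rewrite ltnNge leq_addl //.
Qed.

Definition linear_complexity (R : pzRingType) (s : nat -> R) (N : nat) : nat :=
  ex_minn (has_lin_rec_N s N).

Definition Lp (p N : nat) : nat :=
  linear_complexity (fun u => ((fermat_quotient p u)%:R : 'F_p)) N.

(* Main.v *)
Require Import Defs.
From mathcomp Require Import all_boot all_order all_algebra all_field zify ring.
Set Implicit Arguments. Unset Strict Implicit. Unset Printing Implicit Defensive.
Import GRing.Theory.
Local Open Scope ring_scope.
Lemma binom_aux (u p n : nat) : exists K, ((u+p)^n.+1 = u^n.+1 + n.+1 * p * u^n + p^2 * K)%N.
Proof.
elim: n => [|n [K IH]]; first by exists 0%N; rewrite !expn1 expn0 muln0 addn0 muln1 mul1n.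
exists (u*K + n.+1 * u^n + p*K)%N.
rewrite expnS IH !(expnS u). rewrite -[n.+2]addn1 -[n.+1]addn1 !expnS expn0. ring.
Qed.

Lemma fq_shift p u : prime p -> (0 < u < p)%N ->
  ((fermat_quotient p (u+p))%:R : 'F_p) = (fermat_quotient p u)%:R - (u^(p-2))%:R.
Proof.
move=> pp /andP[u0 up].
have p2 := prime_gt1 pp.
have ndu : ~~ (p %| u)%N by rewrite /dvdn modn_small //; lia.
have ndup : ~~ (p %| u + p)%N by rewrite dvdn_addl.
rewrite /fermat_quotient (negbTE ndu) (negbTE ndup) !Fp_nat_mod //.
have [K HK] := binom_aux u p (p-2).
have e1 : (p - 2).+1 = (p - 1)%N by lia.
rewrite e1 in HK; rewrite HK.
have X1 : (0 < u ^ (p - 1))%N by rewrite expn_gt0 u0.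
have gen : forall X A B, (0 < X)%N -> ((X + A + B).-1 = X.-1 + (A + B))%N by move=> *; lia.
rewrite gen // (mulnC (p-1)%N p) -mulnA expnS expn1 -mulnA -mulnDr.
rewrite divnDr ?dvdn_mulr // mulKn ?prime_gt0 // natrD natrD !natrM pchar_Fp_0 //.
rewrite natrB; last lia.
rewrite pchar_Fp_0 // mul0r addr0; ring.
Qed.

Lemma fermatF p (x : 'F_p) : prime p -> x != 0 -> x ^+ (p-1) = 1.
Proof.
move=> pp x0; have := expf_card x; rewrite card_Fp //.
move=> h; have : x ^+ (p - 1).+1 = x by rewrite subn1 prednK ?prime_gt0.
rewrite exprSr => /(congr1 (fun y => y / x)); rewrite mulfK // divff //.
Qed.

Lemma natF_neq0 p k : prime p -> (0 < k < p)%N -> (k%:R : 'F_p) != 0.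
Proof.
move=> pp /andP[k0 kp]; rewrite -(dvdn_pcharf (pchar_Fp pp)).
apply/negP => /dvdn_leq; lia.
Qed.

Lemma dlem p x : prime p -> (0 < x < p)%N ->
  (x%:R : 'F_p) * ((fermat_quotient p (x+p))%:R - (fermat_quotient p x)%:R) = -1.
Proof.
move=> pp hx; rewrite fq_shift // addrC addKr mulrN -natrM -expnS.
have -> : (p - 2).+1 = (p - 1)%N by have := prime_gt1 pp; lia.
by rewrite natrX fermatF // natF_neq0.
Qed.
Lemma size_prodX (F : fieldType) n (P : pred 'I_n) (G : nat -> F) :
  size (\prod_(j < n | P j) ('X - (G j)%:P)) = #|P|.+1.
Proof.
by rewrite -big_filter size_prod_XsubC deprecated_filter_index_enum -cardE.
Qed.

Lemma card_skip L (i : 'I_L) : #|[pred j : 'I_L.+1 | (j : nat) != i]| = L.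
Proof.
rewrite -[RHS]/(L.+1.-1) -[in RHS](card_ord L.+1) -(cardC1 (widen_ord (leqnSn L) i)).
by apply: eq_card => j.
Qed.

Lemma prod_skip (F : fieldType) L (x : nat -> F) (i : 'I_L) :
  (forall j, (j <= L)%N -> x j != 0) ->
  \prod_(j < L.+1 | (j : nat) != i) x j = (\prod_(j < L.+1) x j) / x i.
Proof.
move=> nz.
rewrite [in RHS](bigD1 (widen_ord (leqnSn L) i)) //= mulrC mulKf //.
by apply: nz; apply: ltnW.
Qed.

Definition sq (p u : nat) : 'F_p := (fermat_quotient p u)%:R.

Lemma core p N L (c : 'I_L -> 'F_p) : prime p ->
  (forall u, (u + L < N)%N -> sq p (u + L) = \sum_(i < L) c i * sq p (u + i)) ->
  ((minn p (N - p)).-1 <= 2 * L)%N.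
Proof.
move=> pp rec.
have p1 := prime_gt1 pp.
set M := minn p (N - p).
rewrite leqNgt; apply/negP => hM.
have hMp : (M <= p)%N by apply: geq_minl.
have hMN : (M + p <= N)%N by have := geq_minr p (N - p); lia.
have dinv : forall x, (0 < x < p)%N -> sq p (x + p) - sq p x = - (x%:R)^-1.
  move=> x hx; apply: (mulfI (natF_neq0 pp hx)).
  by rewrite /sq dlem // mulrN divff // natF_neq0.
have drec : forall u, (0 < u)%N -> (u + L < M)%N ->
    ((u + L)%:R : 'F_p)^-1 = \sum_(i < L) c i * ((u + i)%:R)^-1.
  move=> u u0 uL.
  have e1 := rec u ltac:(lia).
  have e2 := rec (u + p)%N ltac:(lia).
  have : sq p (u + L + p) - sq p (u + L) =
      \sum_(i < L) c i * (sq p (u + i + p) - sq p (u + i)).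
    under eq_bigr do rewrite mulrBr.
    rewrite sumrB e1 (addnAC u L p) e2.
    by congr (_ - _); apply: eq_bigr => i _; rewrite (addnAC u p i).
  rewrite dinv; last lia.
  rewrite (eq_bigr (fun i : 'I_L => c i * - ((u + i)%:R)^-1)); last first.
    by move=> i _; rewrite dinv //; have := ltn_ord i; lia.
  under eq_bigr do rewrite mulrN.
  by rewrite sumrN => /oppr_inj.
pose F := fun j : nat => ('X - (- (j%:R : 'F_p))%:P).
pose h := \prod_(j < L) F j - \sum_(i < L) c i *: \prod_(j < L.+1 | (j : nat) != i) F j.
have ev : forall x : 'F_p, h.[x] = \prod_(j < L) (x + j%:R) -
    \sum_(i < L) c i * \prod_(j < L.+1 | (j : nat) != i) (x + j%:R).
  move=> x; rewrite /h hornerD hornerN horner_prod horner_sum.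
  congr (_ - _); first by apply: eq_bigr => j _; rewrite hornerXsubC opprK.
  apply: eq_bigr => i _; rewrite hornerZ horner_prod; congr (_ * _).
  by apply: eq_bigr => j _; rewrite hornerXsubC opprK.
have hnz : h != 0.
  apply/negP => /eqP h0; have := ev (- L%:R); rewrite h0 horner0.
  rewrite [\sum_(i < L) _]big1 ?subr0; last first.
    move=> i _; rewrite (bigD1 (@ord_max L)) /=; last by rewrite neq_ltn ltn_ord orbT.
    by rewrite addNr mul0r mulr0.
  apply/eqP; rewrite eq_sym; apply/prodf_neq0 => j _.
  have hj := ltn_ord j.
  rewrite addrC -opprB -natrB ?oppr_eq0; last by apply: ltnW.
  apply: natF_neq0 => //; lia.
have hsz : (size h <= L.+1)%N.
  rewrite /h /F; apply: leq_trans (size_polyD _ _) _; rewrite size_polyN geq_max.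
  rewrite (size_prodX xpredT (fun n => - (n%:R : 'F_p))) cardT size_enum_ord leqnn /=.
  apply: leq_trans (size_sum _ _ _) _; apply/bigmax_leqP => i _.
  by apply: leq_trans (size_scale_leq _ _) _; rewrite (size_prodX _ (fun n => - (n%:R : 'F_p))) card_skip.
pose rs := [seq (u%:R : 'F_p) | u <- iota 1 (M - L - 1)].
have Hall : all (root h) rs.
  apply/allP => y /mapP [u hu ->]; rewrite mem_iota in hu.
  have u0 : (0 < u)%N by case/andP: hu.
  have uL : (u + L < M)%N by case/andP: hu => _; lia.
  pose x := fun j : nat => ((u + j)%:R : 'F_p).
  have xnz : forall j, (j <= L)%N -> x j != 0 by move=> j hj; apply: natF_neq0; lia.
  rewrite /root ev.
  under eq_bigr do rewrite -natrD.
  under [X in _ - X]eq_bigr => i _.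
    under eq_bigr do rewrite -natrD.
    rewrite (prod_skip i xnz).
  over.
  have eP : \prod_(j < L) x j = (\prod_(j < L.+1) x j) / x L.
    by rewrite big_ord_recr /= mulfK // xnz.
  rewrite eP /= [x L]/x (drec u) // mulr_sumr subr_eq0; apply/eqP.
  by apply: eq_bigr => i _; rewrite mulrCA mulrC.
have Huniq : uniq rs.
  rewrite map_inj_in_uniq ?iota_uniq // => a b; rewrite !mem_iota => ha hb eab.
  case: (ltngtP a b) => // hab; exfalso.
    have := natF_neq0 (k := (b - a)%N) pp ltac:(lia).
    by rewrite natrB ?eab ?subrr ?eqxx //; apply: ltnW.
  have := natF_neq0 (k := (a - b)%N) pp ltac:(lia).
  by rewrite natrB ?eab ?subrr ?eqxx //; apply: ltnW.
have := max_poly_roots hnz Hall Huniq.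
rewrite size_map size_iota => hr.
have := leq_trans hr hsz; lia.
Qed.
Local Close Scope ring_scope.
Import Order.TTheory.
Theorem theorem13 (p N : nat) :
  prime p -> (1 <= N)%N -> (N < p ^ 2)%N ->
  (Num.min (p%:Z - 1) (N%:Z - p%:Z - 1) <= 2 * (Lp p N)%:Z)%R.
Proof.
move=> pp N1 Np.
rewrite /Lp /linear_complexity; case: ex_minnP => L /boolp.asboolP [c hc] _.
have := core pp hc.
rewrite ge_min => H; apply/orP.
case: (leqP p (N - p)) => h; [left|right]; lia.
Qed.
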